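(* Let $\mathbb{F}$ be a field, $p,q\in\mathbb{F}[t]$ monic of degree $2$, and $\mathcal{W}_{p,q}=\mathbb{F}\langle a,b\rangle/(p(a),q(b))$. An element $x\in\mathcal{W}_{p,q}$ is invertible if and only if $N(x)\in\mathbb{F}^\times$, where $N(x)=xx^\star$.
   Context: $\mathcal{W}_{p,q}$ is the free associative unital $\mathbb{F}$-algebra on two generators modulo the ideal generated by $p(a),q(b)$. For a $2$-dimensional algebra set $x^\star=\mathrm{tr}(x)-x$; the adjunction $x\mapsto x^\star$ of $\mathcal{W}_{p,q}$ is the unique $\mathbb{F}$-linear anti-automorphism agreeing with this on $\mathbb{F}[a]$ and $\mathbb{F}[b]$ (so $a^\star=\mathrm{tr}(p)-a$, $b^\star=\mathrm{tr}(q)-b$). The norm $N(x)=xx^\star=x^\star x$ lies in the center $\mathbb{F}[\omega]$, $\omega=ab^\star+ba^\star$, and is multiplicative. *)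

(* Defs.v *)
From HB Require Import structures.
From mathcomp Require Import all_boot all_order all_algebra.
Set Implicit Arguments. Unset Strict Implicit. Unset Printing Implicit Defensive.
Import GRing.Theory.
Local Open Scope ring_scope.

Definition peval (F : fieldType) (A : algType F) (p : {poly F}) (x : A) : A :=
  (map_poly (in_alg A) p).[x].

Definition is_alg_morph (F : fieldType) (A B : algType F) (f : A -> B) : Prop :=
  [/\ forall (k : F) (x y : A), f (k *: x + y) = k *: f x + f y,
      f 1 = 1 &
      forall x y : A, f (x * y) = f x * f y].

(* (A, a, b) is the algebra W_{p,q} = F<a,b>/(p(a), q(b)), characterised by
   its universal property as the presented F-algebra. *)
Definition is_W (F : fieldType) (p q : {poly F}) (A : algType F) (a b : A) : Prop :=
  [/\ peval p a = 0, peval q b = 0,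
      (forall (B : algType F) (a' b' : B), peval p a' = 0 -> peval q b' = 0 ->
         exists f : A -> B, is_alg_morph f /\ f a = a' /\ f b = b') &
      (forall (B : algType F) (f g : A -> B), is_alg_morph f -> is_alg_morph g ->
         f a = g a -> f b = g b -> forall x, f x = g x)].

(* Trace of the generator of F[t]/(p) for monic p of degree 2:
   p = t^2 - tr(p) t + n(p). *)
Definition trp (F : fieldType) (p : {poly F}) : F := - p`_1.

Definition is_adjunction (F : fieldType) (p q : {poly F}) (A : algType F) (a b : A)
  (star : A -> A) : Prop :=
  [/\ forall (k : F) (x y : A), star (k *: x + y) = k *: star x + star y,
      forall x y : A, star (x * y) = star y * star x,
      star 1 = 1,
      star a = (trp p)%:A - a &
      star b = (trp q)%:A - b].

(* Main.v *)
Require Import Defs.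
From HB Require Import structures.
From mathcomp Require Import all_boot all_order all_algebra.
Import GRing.Theory.
Local Open Scope ring_scope.
From mathcomp Require Import ring boolp.

Set Implicit Arguments. Unset Strict Implicit.

Section Gen.
Variables (F : fieldType) (A B : algType F).

Lemma pevalE (r : {poly F}) (x : A) : peval r x = horner_alg x r.
Proof. by []. Qed.

Variable f : A -> B.
Hypothesis hf : is_alg_morph f.

Lemma mD x y : f (x + y) = f x + f y.
Proof. have [h _ _] := hf. by rewrite -{1}[x]scale1r h scale1r. Qed.
Lemma m0 : f 0 = 0.
Proof. have := mD 0 0; rewrite addr0 => h; apply: (addrI (f 0)); by rewrite -h addr0. Qed.
Lemma mZ k x : f (k *: x) = k *: f x.
Proof. by have [h _ _] := hf; rewrite -[k *: x]addr0 h m0 addr0. Qed.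
Lemma mN x : f (- x) = - f x.
Proof. by rewrite -scaleN1r mZ scaleN1r. Qed.
Lemma mB x y : f (x - y) = f x - f y.
Proof. by rewrite mD mN. Qed.
Lemma m1 : f 1 = 1.
Proof. by have [_ ? ?] := hf. Qed.
Lemma mM x y : f (x * y) = f x * f y.
Proof. by have [_ ? ?] := hf. Qed.
Lemma mA k : f (k%:A) = k%:A.
Proof. by rewrite mZ m1. Qed.
Lemma m_horner r x : f (horner_alg x r) = horner_alg (f x) r.
Proof.
elim/poly_ind: r => [|r c IH]; first by rewrite !raddf0 m0.
by rewrite !rmorphD !rmorphM /= !horner_algX !horner_algC mD mM IH mA.
Qed.
Lemma m_peval r x : f (peval r x) = peval r (f x).
Proof. exact: m_horner. Qed.
End Gen.

Lemma poly3 {F : fieldType} {p : {poly F}} : p \is monic -> size p = 3%N ->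
  p = 'X^2 + p`_1 *: 'X + (p`_0)%:P.
Proof.
move=> mp sp; apply/polyP => i; rewrite coefD coefD coefXn coefZ coefX coefC.
have l2 : p`_2 = 1 by move/monicP: mp; rewrite /lead_coef sp.
case: i => [|[|[|i]]] /=; rewrite ?mulr0 ?mulr1 ?add0r ?addr0 //.
by rewrite nth_default ?sp // mulr0 !addr0.
Qed.

Lemma peval3 (F : fieldType) (A : algType F) (p : {poly F}) (x : A) :
  p \is monic -> size p = 3%N -> peval p x = x * x + p`_1 *: x + (p`_0)%:A.
Proof.
move=> mp sp; rewrite pevalE {1}(poly3 mp sp) !rmorphD /= linearZ /= rmorphXn /=.
by rewrite horner_algX horner_algC expr2 mulr_algl.
Qed.

Section Sub.
Variables (F : fieldType) (A : algType F) (P : A -> Prop).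
Hypothesis P1 : P 1.
Hypothesis PD : forall k x y, P x -> P y -> P (k *: x + y).
Hypothesis PM : forall x y, P x -> P y -> P (x * y).
Definition Sb : A -> bool := fun x => `[< P x >].
Lemma Sb_closed : subalg_closed Sb.
Proof.
split; first by apply/asboolP.
- by move=> k x y /asboolP hx /asboolP hy; apply/asboolP; apply: PD.
- by move=> x y /asboolP hx /asboolP hy; apply/asboolP; apply: PM.
Qed.
HB.instance Definition _ := GRing.isSubalgClosed.Build F A Sb (GRing.subalg_closed_semi Sb_closed).
Definition subT := {x : A | Sb x}.
HB.instance Definition _ := [isSub of subT for (@sval A Sb)].
HB.instance Definition _ := [Equality of subT by <:].
HB.instance Definition _ := [Choice of subT by <:].
HB.instance Definition _ := [SubChoice_isSubAlgebra of subT by <:].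

Lemma val_morph : is_alg_morph (fun x : subT => val x).
Proof. by split. Qed.

Lemma sub_all (p q : {poly F}) (a b : A) : is_W p q a b -> P a -> P b -> forall x, P x.
Proof.
move=> [Ep Eq Ex U] Pa Pb x.
have Sa : Sb a by apply/asboolP.
have Sb' : Sb b by apply/asboolP.
pose a' : subT := exist _ a Sa.
pose b' : subT := exist _ b Sb'.
have Ep' : peval p a' = 0.
  by apply: val_inj; rewrite (m_peval val_morph) /= Ep.
have Eq' : peval q b' = 0.
  by apply: val_inj; rewrite (m_peval val_morph) /= Eq.
have [f [hf [fa fb]]] := Ex subT a' b' Ep' Eq'.
have hvf : is_alg_morph (fun y => val (f y)).
  by split=> [k u v|/=|u v]; rewrite ?(mD hf) ?(mZ hf) ?(m1 hf) ?(mM hf).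
have hid : is_alg_morph (fun y : A => y) by [].
have -> : x = val (f x) by symmetry; apply: (U A _ _ hvf hid) => /=; rewrite ?fa ?fb.
exact/asboolP/(valP (f x)).
Qed.
End Sub.

Section Model.
Variable F : fieldType.
Definition MB := 'M[{poly F}]_2.
HB.instance Definition _ := GRing.NzRing.on MB.
Definition scMB (k : F) (M : MB) : MB := (k%:P) *: (M : 'M[{poly F}]_2).
Fact scMBA a b v : scMB a (scMB b v) = scMB (a * b) v.
Proof. by rewrite /scMB scalerA polyCM. Qed.
Fact scMB1 : left_id 1 scMB.
Proof. by move=> v; rewrite /scMB scale1r. Qed.
Fact scMBDr : right_distributive scMB +%R.
Proof. by move=> k u v; rewrite /scMB scalerDr. Qed.
Fact scMBDl v : {morph scMB^~ v: a b / a + b}.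
Proof. by move=> x y; rewrite /scMB polyCD scalerDl. Qed.
HB.instance Definition _ := GRing.Zmodule_isLmodule.Build F MB scMBA scMB1 scMBDr scMBDl.
Fact scMBAl (k : F) (u v : MB) : k *: (u * v) = (k *: u) * v.
Proof. by rewrite /= /scMB -!mulmxE; apply: scalemxAl. Qed.
HB.instance Definition _ := GRing.Lmodule_isLalgebra.Build F MB scMBAl.
Fact scMBAr (k : F) (u v : MB) : k *: (u * v) = u * (k *: v).
Proof. by rewrite /= /scMB -!mulmxE; apply: scalemxAr. Qed.
HB.instance Definition _ := GRing.Lalgebra_isAlgebra.Build F MB scMBAr.

Definition mk2 (x00 x01 x10 x11 : {poly F}) : MB :=
  \matrix_(i < 2, j < 2) (if i == 0 :> nat then (if j == 0 :> nat then x00 else x01)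
                          else (if j == 0 :> nat then x10 else x11)).

Lemma mk2_mul a0 a1 a2 a3 b0 b1 b2 b3 :
  mk2 a0 a1 a2 a3 * mk2 b0 b1 b2 b3 =
  mk2 (a0*b0 + a1*b2) (a0*b1+a1*b3) (a2*b0+a3*b2) (a2*b1+a3*b3).
Proof.
rewrite -mulmxE; apply/matrixP => i j; rewrite !mxE !big_ord_recl big_ord0 !mxE /=.
by case: i => [[|[|//]] ?]; case: j => [[|[|//]] ?] /=; rewrite addr0.
Qed.
Lemma mk2_add a0 a1 a2 a3 b0 b1 b2 b3 :
  mk2 a0 a1 a2 a3 + mk2 b0 b1 b2 b3 = mk2 (a0+b0) (a1+b1) (a2+b2) (a3+b3).
Proof.
apply/matrixP => i j; rewrite !mxE.
by case: i => [[|[|//]] ?]; case: j => [[|[|//]] ?].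
Qed.
Lemma mk2_scale (k : F) a0 a1 a2 a3 :
  k *: mk2 a0 a1 a2 a3 = mk2 (k%:P*a0) (k%:P*a1) (k%:P*a2) (k%:P*a3).
Proof.
apply/matrixP => i j; rewrite /= /scMB !mxE.
by case: i => [[|[|//]] ?]; case: j => [[|[|//]] ?].
Qed.
Lemma mk2_opp a0 a1 a2 a3 : - mk2 a0 a1 a2 a3 = mk2 (- a0) (- a1) (- a2) (- a3).
Proof.
apply/matrixP => i j; rewrite !mxE.
by case: i => [[|[|//]] ?]; case: j => [[|[|//]] ?].
Qed.
Lemma mk2_1 : (1 : MB) = mk2 1 0 0 1.
Proof.
apply/matrixP => i j; rewrite !mxE.
by case: i => [[|[|//]] ?]; case: j => [[|[|//]] ?].
Qed.
Lemma mk2_0 : (0 : MB) = mk2 0 0 0 0.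
Proof.
apply/matrixP => i j; rewrite !mxE.
by case: i => [[|[|//]] ?]; case: j => [[|[|//]] ?].
Qed.
Lemma mk2_alg (k : F) : k%:A = mk2 k%:P 0 0 k%:P :> MB.
Proof. by rewrite mk2_1 mk2_scale !mulr0 !mulr1. Qed.
Lemma mk2_inj a0 a1 a2 a3 b0 b1 b2 b3 : mk2 a0 a1 a2 a3 = mk2 b0 b1 b2 b3 -> a0 = b0.
Proof. by move/matrixP/(_ 0 0); rewrite !mxE. Qed.
End Model.

Unset Implicit Arguments. Set Strict Implicit.

Lemma zm1 (V : zmodType) (X Y Z W : V) : X - (X - Z + W) = Y - (W + (Y - Z)).
Proof.
rewrite !opprD !opprK !addrA addrN add0r.
by rewrite (addrAC Y) subrr add0r addrC.
Qed.

Lemma zm4 (V : zmodType) (x0 x1 x2 x3 y0 y1 y2 y3 : V) :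
  x0 + x1 + x2 + x3 + (y0 + y1 + y2 + y3) = x0 + y0 + (x1 + y1) + (x2 + y2) + (x3 + y3).
Proof. by rewrite addrACA; congr (_ + _); rewrite addrACA; congr (_ + _); exact: addrACA. Qed.

Lemma zm2 (V : zmodType) (X Y Z W : V) : W = - (X + (Y - (Z + W))) + X + Y - Z.
Proof. by rewrite opprD opprB (addrAC (-X)) addNr add0r subrK (addrC Z) addrK. Qed.

Lemma comm_aux (F : fieldType) (A : algType F) (x y : A) (s t : F) :
  x * x = s *: x - t%:A -> GRing.comm x (s *: y - (x * y + y * x)).
Proof.
move=> h; rewrite /GRing.comm.
have e1 : x * x * y = s *: (x * y) - t *: y by rewrite h mulrBl -scalerAl mulr_algl.
have e2 : y * x * x = s *: (y * x) - t *: y by rewrite -mulrA h mulrBr -scalerAr mulr_algr.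
rewrite mulrBr mulrBl mulrDr mulrDl -scalerAr -scalerAl !mulrA e1 e2.
exact: zm1.
Qed.

Record Q4 (F : fieldType) := mkQ { c0 : {poly F}; c1 : {poly F}; c2 : {poly F}; c3 : {poly F} }.
Arguments mkQ {F}. Arguments c0 {F}. Arguments c1 {F}. Arguments c2 {F}. Arguments c3 {F}.

Section Main.
Variables (F : fieldType) (p q : {poly F}).
Hypotheses (hp : p \is monic) (hp2 : size p = 3%N) (hq : q \is monic) (hq2 : size q = 3%N).
Variables (A : algType F) (a b : A).
Hypothesis hW : is_W p q a b.
Variable star : A -> A.
Hypothesis hstar : is_adjunction p q a b star.

Let tp := trp p. Let np := p`_0. Let tq := trp q. Let nq := q`_0.

Lemma ra : a * a = tp *: a - np%:A.
Proof.
have [h _ _ _] := hW; move: h; rewrite peval3 // => /eqP.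
by rewrite -addrA addr_eq0 => /eqP ->; rewrite opprD /tp /trp scaleNr.
Qed.
Lemma rb : b * b = tq *: b - nq%:A.
Proof.
have [_ h _ _] := hW; move: h; rewrite peval3 // => /eqP.
by rewrite -addrA addr_eq0 => /eqP ->; rewrite opprD /tq /trp scaleNr.
Qed.

Lemma sD x y : star (x + y) = star x + star y.
Proof. have [h _ _ _ _] := hstar. by rewrite -{1}[x]scale1r h scale1r. Qed.
Lemma s0 : star 0 = 0.
Proof. have := sD 0 0; rewrite addr0 => h; apply: (addrI (star 0)); by rewrite -h addr0. Qed.
Lemma sZ k x : star (k *: x) = k *: star x.
Proof. have [h _ _ _ _] := hstar. by rewrite -[k *: x]addr0 h s0 addr0. Qed.
Lemma sN x : star (- x) = - star x.
Proof. by rewrite -scaleN1r sZ scaleN1r. Qed.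
Lemma sB x y : star (x - y) = star x - star y.
Proof. by rewrite sD sN. Qed.
Lemma sM x y : star (x * y) = star y * star x.
Proof. by have [_ h _ _ _] := hstar. Qed.
Lemma s1 : star 1 = 1.
Proof. by have [_ _ h _ _] := hstar. Qed.
Lemma sA k : star (k%:A) = k%:A.
Proof. by rewrite sZ s1. Qed.
Lemma sa : star a = tp%:A - a.
Proof. by have [_ _ _ h _] := hstar. Qed.
Lemma sb : star b = tq%:A - b.
Proof. by have [_ _ _ _ h] := hstar. Qed.

Lemma sK x : star (star x) = x.
Proof.
have [_ _ _ U] := hW.
have hm : is_alg_morph (fun y => star (star y)).
  by split=> [k u v|/=|u v]; rewrite ?sD ?sZ ?s1 ?sM.
have hid : is_alg_morph (fun y : A => y) by [].
apply: (U A _ _ hm hid) => /=.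
- by rewrite sa sB sA sa opprB addrC subrK.
- by rewrite sb sB sA sb opprB addrC subrK.
Qed.

Definition om := a * star b + b * star a.

Lemma omE : om = tq *: a + (tp *: b - (a * b + b * a)).
Proof.
rewrite /om sa sb mulrBr mulrBr mulr_algr mulr_algr.
by rewrite opprD !addrA; congr (_ + _); rewrite addrAC.
Qed.
Lemma omE2 : om = tp *: b + (tq *: a - (b * a + a * b)).
Proof. by rewrite omE addrCA (addrC (b * a)). Qed.

Lemma com_a : GRing.comm a om.
Proof.
rewrite omE; apply: commrD; last by apply: comm_aux; exact: ra.
by rewrite /GRing.comm -scalerAr -scalerAl.
Qed.
Lemma com_b : GRing.comm b om.
Proof.
rewrite omE2; apply: commrD; last by apply: comm_aux; exact: rb.
by rewrite /GRing.comm -scalerAr -scalerAl.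
Qed.

Definition ev (r : {poly F}) : A := horner_alg om r.

Lemma ev_comm (x : A) r : GRing.comm x om -> GRing.comm x (ev r).
Proof.
move=> h; elim/poly_ind: r => [|r c IH]; first by rewrite /ev raddf0; exact: commr0.
rewrite /ev rmorphD rmorphM /= horner_algX horner_algC.
apply: commrD; first exact: commrM.
exact/commr_sym/comm_alg.
Qed.
Lemma ev_a r : ev r * a = a * ev r.
Proof. by symmetry; apply: ev_comm; exact: com_a. Qed.
Lemma ev_b r : ev r * b = b * ev r.
Proof. by symmetry; apply: ev_comm; exact: com_b. Qed.
Lemma evD r s : ev (r + s) = ev r + ev s. Proof. exact: rmorphD. Qed.
Lemma evM r s : ev (r * s) = ev r * ev s. Proof. exact: rmorphM. Qed.
Lemma evN r : ev (- r) = - ev r. Proof. exact: rmorphN. Qed.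
Lemma evB r s : ev (r - s) = ev r - ev s. Proof. exact: rmorphB. Qed.
Lemma evC k : ev k%:P = k%:A. Proof. exact: horner_algC. Qed.
Lemma evX : ev 'X = om. Proof. exact: horner_algX. Qed.
Lemma ev0 : ev 0 = 0. Proof. exact: rmorph0. Qed.
Lemma ev1 : ev 1 = 1. Proof. exact: rmorph1. Qed.


Definition Es (c : Q4 F) : A := ev (c0 c) + ev (c1 c) * a + ev (c2 c) * b + ev (c3 c) * (a * b).

Lemma EsE x0 x1 x2 x3 y0 y1 y2 y3 : x0 = y0 -> x1 = y1 -> x2 = y2 -> x3 = y3 ->
  Es (mkQ x0 x1 x2 x3) = Es (mkQ y0 y1 y2 y3).
Proof. by move=> -> -> -> ->. Qed.

Lemma EsD x0 x1 x2 x3 y0 y1 y2 y3 :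
  Es (mkQ x0 x1 x2 x3) + Es (mkQ y0 y1 y2 y3) = Es (mkQ (x0 + y0) (x1 + y1) (x2 + y2) (x3 + y3)).
Proof.
rewrite /Es /= !evD !mulrDl; exact: zm4.
Qed.

Lemma EsM r x0 x1 x2 x3 : ev r * Es (mkQ x0 x1 x2 x3) = Es (mkQ (r * x0) (r * x1) (r * x2) (r * x3)).
Proof. by rewrite /Es /= !mulrDr !evM !mulrA. Qed.

Lemma Es_ev r : Es (mkQ r 0 0 0) = ev r.
Proof. by rewrite /Es /= ev0 !mul0r !addr0. Qed.

Lemma Es_a : a = Es (mkQ 0 1 0 0).
Proof. by rewrite /Es /= ev0 ev1 !mul0r mul1r add0r !addr0. Qed.
Lemma Es_b : b = Es (mkQ 0 0 1 0).
Proof. by rewrite /Es /= ev0 ev1 !mul0r mul1r !add0r !addr0. Qed.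
Lemma Es_ab : a * b = Es (mkQ 0 0 0 1).
Proof. by rewrite /Es /= ev0 ev1 !mul0r mul1r !add0r. Qed.
Lemma Es_aa : a * a = Es (mkQ (- np%:P) tp%:P 0 0).
Proof.
by rewrite /Es /= ra ev0 evN !evC !mul0r !addr0 mulr_algl addrC.
Qed.
Lemma Es_bb : b * b = Es (mkQ (- nq%:P) 0 tq%:P 0).
Proof.
by rewrite /Es /= rb ev0 evN !evC !mul0r !addr0 mulr_algl addrC.
Qed.
Lemma Es_ba : b * a = Es (mkQ (- 'X) tq%:P tp%:P (-1)).
Proof.
rewrite /Es /= evN evX !evC evN ev1 !mulr_algl mulN1r omE; exact: zm2.
Qed.

Definition La (c : Q4 F) : Q4 F :=
  mkQ (- np%:P * c1 c) (c0 c + tp%:P * c1 c) (- np%:P * c3 c) (c2 c + tp%:P * c3 c).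
Definition Rb (c : Q4 F) : Q4 F :=
  mkQ (- nq%:P * c2 c) (- nq%:P * c3 c) (c0 c + tq%:P * c2 c) (c1 c + tq%:P * c3 c).
Definition Lb (c : Q4 F) : Q4 F :=
  mkQ (- 'X * c1 c - nq%:P * c2 c - nq%:P * tp%:P * c3 c) (tq%:P * c1 c + nq%:P * c3 c)
      (c0 c + tp%:P * c1 c + tq%:P * c2 c + (tp%:P * tq%:P - 'X) * c3 c) (- c1 c).

Lemma Es_aab : a * (a * b) = Es (mkQ 0 0 (- np%:P) tp%:P).
Proof.
rewrite mulrA ra mulrBl -scalerAl mulr_algl.
rewrite /Es /= ?ev0 ?evN ?evC ?mul0r ?mulNr ?mulr_algl ?add0r ?addr0 //; exact: addrC.
Qed.
Lemma Es_abb : a * (b * b) = Es (mkQ 0 (- nq%:P) 0 tq%:P).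
Proof.
rewrite rb mulrBr -scalerAr mulr_algr.
rewrite /Es /= ?ev0 ?evN ?evC ?mul0r ?mulNr ?mulr_algl ?add0r ?addr0 //; exact: addrC.
Qed.
Lemma evMa r : ev r * a = Es (mkQ 0 r 0 0).
Proof. by rewrite /Es /= ev0 !mul0r add0r !addr0. Qed.
Lemma evMb r : ev r * b = Es (mkQ 0 0 r 0).
Proof. by rewrite /Es /= ev0 !mul0r !add0r addr0. Qed.
Lemma evMab r : ev r * (a * b) = Es (mkQ 0 0 0 r).
Proof. by rewrite /Es /= ev0 !mul0r !add0r. Qed.
Lemma evE r : ev r = Es (mkQ r 0 0 0).
Proof. by rewrite Es_ev. Qed.

Lemma EsMl x0 x1 x2 x3 y :
  Es (mkQ x0 x1 x2 x3) * y = ev x0 * y + ev x1 * (a * y) + ev x2 * (b * y) + ev x3 * (a * (b * y)).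
Proof. by rewrite /Es /= !mulrDl -!mulrA. Qed.

Lemma Rb_lem x0 x1 x2 x3 : Es (mkQ x0 x1 x2 x3) * b = Es (Rb (mkQ x0 x1 x2 x3)).
Proof.
rewrite [X in X * b]/Es /= !mulrDl -!mulrA Es_abb Es_bb Es_ab evMb.
by rewrite !EsM !EsD /Rb /=; apply: EsE; ring.
Qed.

Lemma Es_bab : b * (a * b) = Es (Rb (mkQ (- 'X) tq%:P tp%:P (-1))).
Proof. by rewrite mulrA Es_ba Rb_lem. Qed.

Lemma La_lem x0 x1 x2 x3 : a * Es (mkQ x0 x1 x2 x3) = Es (La (mkQ x0 x1 x2 x3)).
Proof.
rewrite [X in a * X]/Es /= !mulrDr !mulrA -!ev_a -!mulrA Es_aab Es_aa Es_ab evMa.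
by rewrite !EsM !EsD /La /=; apply: EsE; ring.
Qed.

Lemma Lb_lem x0 x1 x2 x3 : b * Es (mkQ x0 x1 x2 x3) = Es (Lb (mkQ x0 x1 x2 x3)).
Proof.
rewrite [X in b * X]/Es /= !mulrDr !mulrA -!ev_b -!mulrA Es_bab Es_ba Es_bb evMb.
by rewrite !EsM !EsD /Lb /Rb /=; apply: EsE; ring.
Qed.

Definition addQ (c d : Q4 F) := mkQ (c0 c + c0 d) (c1 c + c1 d) (c2 c + c2 d) (c3 c + c3 d).
Definition scQ (r : {poly F}) (d : Q4 F) := mkQ (r * c0 d) (r * c1 d) (r * c2 d) (r * c3 d).
Definition MulQ (c d : Q4 F) : Q4 F :=
  addQ (scQ (c0 c) d) (addQ (scQ (c1 c) (La d)) (addQ (scQ (c2 c) (Lb d)) (scQ (c3 c) (La (Lb d))))).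

Lemma MulQ_lem c d : Es c * Es d = Es (MulQ c d).
Proof.
case: c => x0 x1 x2 x3; case: d => y0 y1 y2 y3.
rewrite EsMl Lb_lem La_lem /Lb /= La_lem /La /= !EsM !EsD.
by rewrite /MulQ /addQ /scQ /La /Lb /=; apply: EsE; ring.
Qed.

Lemma s_om : star om = om.
Proof. by rewrite /om sD !sM !sK addrC. Qed.

Lemma sev r : star (ev r) = ev r.
Proof.
elim/poly_ind: r => [|r c IH]; first by rewrite ev0 s0.
rewrite evD evM evX evC sD sM sA IH s_om; congr (_ + _).
exact: (@ev_comm om r (commr_refl om)).
Qed.

Lemma ev_Es r c : GRing.comm (ev r) (Es c).
Proof.
have ce : forall s, GRing.comm (ev r) (ev s) by move=> s; rewrite /GRing.comm -!evM mulrC.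
rewrite /Es; apply: commrD; [apply: commrD; [apply: commrD|]|];
  rewrite ?ce //; apply: commrM => //; rewrite /GRing.comm ?ev_a ?ev_b //.
by apply: commrM; rewrite /GRing.comm ?ev_a ?ev_b.
Qed.

Definition SAq : Q4 F := mkQ tp%:P (-1) 0 0.
Definition SBq : Q4 F := mkQ tq%:P 0 (-1) 0.
Definition StarQ (c : Q4 F) : Q4 F :=
  addQ (mkQ (c0 c) 0 0 0) (addQ (scQ (c1 c) SAq) (addQ (scQ (c2 c) SBq) (scQ (c3 c) (MulQ SBq SAq)))).

Lemma Es_sa : star a = Es SAq.
Proof.
rewrite sa /Es /= ?ev0 ?evN ?evC ?ev1 ?scale1r ?mul0r ?mulNr ?mul1r ?add0r ?addr0 //.
Qed.
Lemma Es_sb : star b = Es SBq.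
Proof.
rewrite sb /Es /= ?ev0 ?evN ?evC ?ev1 ?scale1r ?mul0r ?mulNr ?mul1r ?add0r ?addr0 //.
Qed.

Ltac qs := cbv beta iota zeta delta [StarQ MulQ SAq SBq La Lb Rb addQ scQ c0 c1 c2 c3].

Lemma star_Es x0 x1 x2 x3 : star (Es (mkQ x0 x1 x2 x3)) = Es (StarQ (mkQ x0 x1 x2 x3)).
Proof.
rewrite [X in star X]/Es /= !sD !sM !sev Es_sa Es_sb MulQ_lem.
rewrite -!ev_Es evE; qs; rewrite !EsM !EsD.
by apply: EsE; ring.
Qed.

Lemma EsN0 e0 e1 e2 e3 : e1 = 0 -> e2 = 0 -> e3 = 0 -> Es (mkQ e0 e1 e2 e3) = ev e0.
Proof. by move=> -> -> ->; exact: Es_ev. Qed.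

Lemma span x : exists c, x = Es c.
Proof.
apply: (@sub_all F A (fun x => exists c, x = Es c) _ _ _ p q a b hW).
- by exists (mkQ 1 0 0 0); rewrite Es_ev ev1.
- move=> k _ _ [[x0 x1 x2 x3] ->] [[y0 y1 y2 y3] ->].
  by rewrite -mulr_algl -evC EsM EsD; eexists.
- by move=> _ _ [c ->] [d ->]; rewrite MulQ_lem; eexists.
- by rewrite Es_a; eexists.
- by rewrite Es_b; eexists.
Qed.

Lemma norm_comm x : x * star x = star x * x.
Proof.
have [[x0 x1 x2 x3] ->] := span x.
rewrite star_Es !MulQ_lem; qs.
by apply: EsE; ring.
Qed.

Lemma norm_ev x : exists n, x * star x = ev n.
Proof.
have [[x0 x1 x2 x3] ->] := span x.
rewrite star_Es !MulQ_lem; qs.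
by eexists; apply: EsN0; ring.
Qed.

Lemma ev_central r x : ev r * x = x * ev r.
Proof. by have [c ->] := span x; exact: ev_Es. Qed.

Lemma ev_inj r : ev r = 0 -> r = 0.
Proof.
move=> er.
pose a' : MB F := mk2 0 (- np%:P) 1 tp%:P.
pose y := 'X * (tq%:P - 'X) - nq%:P.
pose b' : MB F := mk2 'X y 1 (tq%:P - 'X).
have Ea : peval p a' = 0.
  rewrite peval3 // /a' mk2_mul mk2_scale mk2_alg !mk2_add mk2_0 /tp /np /trp.
  by congr mk2; rewrite ?polyCN; ring.
have Eb : peval q b' = 0.
  rewrite peval3 // /b' /y mk2_mul mk2_scale mk2_alg !mk2_add mk2_0 /tq /nq /trp.
  by congr mk2; rewrite ?polyCN; ring.
have [_ _ Ex _] := hW.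
have [f [hf [fa fb]]] := Ex _ a' b' Ea Eb.
pose s := 'X^2 + (tp - tq) *: 'X + (np + nq)%:P.
have fom : f om = mk2 s 0 0 s.
  rewrite /om sa sb (mD hf) !(mM hf) !(mB hf) !(mA hf) fa fb /a' /b' /y !mk2_alg.
  rewrite !mk2_opp !mk2_add !mk2_mul !mk2_add /s -mul_polyC polyCB polyCD.
  by congr mk2; ring.
have s1 : (1 < size s)%N.
  have c2 : s`_2 = 1.
    by rewrite /s !coefD coefXn coefZ coefX coefC /= mulr0 addr0 addr0.
  by rewrite ltnNge; apply/negP => h; move: c2; rewrite nth_default ?(leq_trans h) // => /eqP; rewrite eq_sym oner_eq0.
have hr : forall r, horner_alg (mk2 s 0 0 s) r = mk2 (r \Po s) 0 0 (r \Po s).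
  move=> r'; elim/poly_ind: r' => [|r' c IH].
    by rewrite raddf0 comp_poly0 mk2_0.
  rewrite rmorphD rmorphM /= horner_algX horner_algC IH mk2_alg mk2_mul mk2_add.
  rewrite comp_polyD comp_polyM comp_polyX comp_polyC.
  by congr mk2; ring.
move: er => /(congr1 f); rewrite (m0 hf) /ev (m_horner hf) fom hr mk2_0 => /mk2_inj /eqP.
by rewrite comp_poly_eq0 // => /eqP.
Qed.


Lemma main_sec x : (exists y : A, x * y = 1 /\ y * x = 1) <->
  (exists c : F, c != 0 /\ x * star x = c%:A).
Proof.
split.
- move=> [y [xy yx]].
  have [n1 e1] := norm_ev x; have [n2 e2] := norm_ev y.
  have h : ev (n1 * n2) = 1.
    rewrite evM -e1 -mulrA -(ev_central n2 (star x)) mulrA -e2 mulrA xy mul1r.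
    by rewrite -sM xy s1.
  have h2 : n1 * n2 = 1.
    by apply/eqP; rewrite -subr_eq0; apply/eqP/ev_inj; rewrite evB h ev1 subrr.
  have u1 : n1 \is a GRing.unit by apply/unitrP; exists n2; rewrite h2 mulrC h2.
  move: u1; rewrite poly_unitE => /andP [/eqP sz u0].
  exists n1`_0; split; first by rewrite -unitfE.
  have hn : n1 = (n1`_0)%:P by apply: size1_polyC; rewrite sz.
  by rewrite e1 {1}hn evC.
- move=> [c [cn0 e]]; exists (c^-1 *: star x); split.
  + by rewrite -scalerAr e scalerA mulVf // scale1r.
  + by rewrite -scalerAl -norm_comm e scalerA mulVf // scale1r.
Qed.

End Main.

Theorem mainTheorem17 (F : fieldType) (p q : {poly F})
  (hp : p \is monic) (hp2 : size p = 3%N) (hq : q \is monic) (hq2 : size q = 3%N)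
  (A : algType F) (a b : A) (hW : is_W p q a b)
  (star : A -> A) (hstar : is_adjunction p q a b star) (x : A) :
  (exists y : A, x * y = 1 /\ y * x = 1) <->
  (exists c : F, c != 0 /\ x * star x = c%:A).
Proof.
exact: (@main_sec F p q hp hp2 hq hq2 A a b hW star hstar x).
Qed.
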